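(* Consider the central arrangement in $\mathbb{R}^8$ (coordinates $l_{ijk}$, $i,j,k\in\{0,1\}$) of the six hyperplanes $\mathcal{L}_{1,0}=\{l_{000}+l_{011}-l_{001}-l_{010}=0\}$, $\mathcal{L}_{1,1}=\{l_{100}+l_{111}-l_{101}-l_{110}=0\}$, $\mathcal{L}_{2,0}=\{l_{000}+l_{101}-l_{001}-l_{100}=0\}$, $\mathcal{L}_{2,1}=\{l_{010}+l_{111}-l_{011}-l_{110}=0\}$, $\mathcal{L}_{3,0}=\{l_{000}+l_{110}-l_{010}-l_{100}=0\}$, $\mathcal{L}_{3,1}=\{l_{001}+l_{111}-l_{011}-l_{101}=0\}$. The complement of the union of these hyperplanes has exactly $46$ connected components (regions), and exactly $44$ of these regions are contained in the set $\{l\in\mathbb{R}^8:\ \exp(l)/\sum_{x}\exp(l_x)\in\mathcal{M}_{3,3}\}$, where $\exp$ is applied entrywise.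
   Context: $\Delta_7$ is the set of $2\times2\times2$ tensors with nonnegative entries summing to $1$. $\mathcal{M}_{3,3}$ is the set of $p\in\Delta_7$ that are a sum of three tensors $a\otimes b\otimes c$ (entries $a_ib_jc_k$) with $a,b,c\in\mathbb{R}^2_{\ge0}$. *)

(* Defs.v *)
From Stdlib Require Import Reals.
Open Scope R_scope.

(* A point of R^8 = a real 2x2x2 tensor; index i,j,k : bool, with
   false = 0 and true = 1, so  l false true true  is  l_{011}. *)
Definition pt := bool -> bool -> bool -> R.

Definition sumb (g : bool -> R) : R := g false + g true.
Definition sum8 (f : pt) : R :=
  sumb (fun i => sumb (fun j => sumb (fun k => f i j k))).

(* Topology of R^8 (sup-norm balls, same topology as Euclidean). *)
Definition open_set (U : pt -> Prop) : Prop :=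
  forall x, U x -> exists eps, 0 < eps /\
    forall y, (forall i j k, Rabs (y i j k - x i j k) < eps) -> U y.

Definition connected_set (A : pt -> Prop) : Prop :=
  ~ exists U V : pt -> Prop, open_set U /\ open_set V /\
      (forall x, A x -> U x \/ V x) /\
      (exists x, A x /\ U x) /\ (exists x, A x /\ V x) /\
      (forall x, A x -> U x -> V x -> False).

Definition same_component (A : pt -> Prop) (x y : pt) : Prop :=
  exists C : pt -> Prop, (forall z, C z -> A z) /\ connected_set C /\ C x /\ C y.

Definition L10 (l : pt) := l false false false + l false true true - l false false true - l false true false.
Definition L11 (l : pt) := l true false false + l true true true - l true false true - l true true false.
Definition L20 (l : pt) := l false false false + l true false true - l false false true - l true false false.
Definition L21 (l : pt) := l false true false + l true true true - l false true true - l true true false.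
Definition L30 (l : pt) := l false false false + l true true false - l false true false - l true false false.
Definition L31 (l : pt) := l false false true + l true true true - l false true true - l true false true.

Definition arr_complement (l : pt) : Prop :=
  L10 l <> 0 /\ L11 l <> 0 /\ L20 l <> 0 /\ L21 l <> 0 /\ L30 l <> 0 /\ L31 l <> 0.

Definition in_simplex (p : pt) : Prop :=
  (forall i j k, 0 <= p i j k) /\ sum8 p = 1.

Definition M33 (p : pt) : Prop :=
  in_simplex p /\
  exists a b c : nat -> bool -> R,
    (forall r i, 0 <= a r i) /\ (forall r i, 0 <= b r i) /\ (forall r i, 0 <= c r i) /\
    forall i j k, p i j k = a 0%nat i * b 0%nat j * c 0%nat k
                          + a 1%nat i * b 1%nat j * c 1%nat k
                          + a 2%nat i * b 2%nat j * c 2%nat k.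

Definition softmax (l : pt) : pt :=
  fun i j k => exp (l i j k) / sum8 (fun i' j' k' => exp (l i' j' k')).

(* Main.v *)
Require Import Defs.
From Stdlib Require Import Reals.
From Stdlib Require Import Lra Lia Classical FunctionalExtensionality List.
Import ListNotations.
Open Scope R_scope.

Definition rank3 (p : pt) : Prop :=
  exists a b c : nat -> bool -> R,
    (forall r i, 0 <= a r i) /\ (forall r i, 0 <= b r i) /\ (forall r i, 0 <= c r i) /\
    forall i j k, p i j k = a 0%nat i * b 0%nat j * c 0%nat k
                          + a 1%nat i * b 1%nat j * c 1%nat k
                          + a 2%nat i * b 2%nat j * c 2%nat k.

Definition form4 (l : pt) (i1 j1 k1 i2 j2 k2 i3 j3 k3 i4 j4 k4 : bool) :=
  l i1 j1 k1 + l i2 j2 k2 - l i3 j3 k3 - l i4 j4 k4.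

Lemma form4_open_pos (i1 j1 k1 i2 j2 k2 i3 j3 k3 i4 j4 k4 : bool) :
  Defs.open_set (fun l : pt => 0 < form4 l i1 j1 k1 i2 j2 k2 i3 j3 k3 i4 j4 k4).
Proof.
  intros x Hx. exists (form4 x i1 j1 k1 i2 j2 k2 i3 j3 k3 i4 j4 k4 / 4). split; [lra|].
  intros y Hy. unfold form4 in *.
  destruct (Rabs_def2 _ _ (Hy i1 j1 k1)).
  destruct (Rabs_def2 _ _ (Hy i2 j2 k2)).
  destruct (Rabs_def2 _ _ (Hy i3 j3 k3)).
  destruct (Rabs_def2 _ _ (Hy i4 j4 k4)). lra.
Qed.

Lemma form4_open_neg (i1 j1 k1 i2 j2 k2 i3 j3 k3 i4 j4 k4 : bool) :
  Defs.open_set (fun l : pt => form4 l i1 j1 k1 i2 j2 k2 i3 j3 k3 i4 j4 k4 < 0).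
Proof.
  intros x Hx. exists (- form4 x i1 j1 k1 i2 j2 k2 i3 j3 k3 i4 j4 k4 / 4). split; [lra|].
  intros y Hy. unfold form4 in *.
  destruct (Rabs_def2 _ _ (Hy i1 j1 k1)).
  destruct (Rabs_def2 _ _ (Hy i2 j2 k2)).
  destruct (Rabs_def2 _ _ (Hy i3 j3 k3)).
  destruct (Rabs_def2 _ _ (Hy i4 j4 k4)). lra.
Qed.

Lemma sc_sep (F : pt -> R) x y :
  (forall z, arr_complement z -> F z <> 0) ->
  Defs.open_set (fun z => 0 < F z) -> Defs.open_set (fun z => F z < 0) ->
  same_component arr_complement x y -> 0 < F x -> F y < 0 -> False.
Proof.
  intros HF Hp Hn [C [HC [Hcon [Cx Cy]]]] Fx Fy.
  apply Hcon. exists (fun z => 0 < F z), (fun z => F z < 0).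
  repeat split; auto.
  - intros z Cz. specialize (HF z (HC z Cz)).
    destruct (Rlt_or_le 0 (F z)); [left; auto | right; lra].
  - exists x; auto.
  - exists y; auto.
  - intros z _ A B; lra.
Qed.

Lemma sc_sign (F : pt -> R) x y :
  (forall z, arr_complement z -> F z <> 0) ->
  Defs.open_set (fun z => 0 < F z) -> Defs.open_set (fun z => F z < 0) ->
  same_component arr_complement x y ->
  (0 < F x -> 0 < F y) /\ (F x < 0 -> F y < 0).
Proof.
  intros HF Hp Hn Hsc. assert (Cy : arr_complement y).
  { destruct Hsc as [C [HC [_ [_ Cy]]]]; auto. }
  assert (Cx : arr_complement x).
  { destruct Hsc as [C [HC [_ [Cx _]]]]; auto. }
  split; intro H.
  - destruct (Rlt_or_le 0 (F y)); auto.
    exfalso. assert (F y <> 0) by auto.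
    apply (sc_sep F x y); auto. lra.
  - destruct (Rlt_or_le (F y) 0); auto.
    exfalso. assert (F y <> 0) by auto.
    destruct Hsc as [C [HC [Hcon [Cx' Cy']]]].
    apply Hcon. exists (fun z => F z < 0), (fun z => 0 < F z).
    repeat split; auto.
    + intros z Cz. assert (F z <> 0) by auto.
      destruct (Rlt_or_le 0 (F z)); [right; auto | left; lra].
    + exists x; auto.
    + exists y; split; auto; lra.
    + intros z _ A B; lra.
Qed.


Definition gpt (x y : pt) (t : R) : pt := fun i j k => x i j k + t * (y i j k - x i j k).

Definition absum (x y : pt) : R := 1 + sum8 (fun i j k => Rabs (y i j k - x i j k)).

Lemma absum_bound x y i j k : Rabs (y i j k - x i j k) <= absum x y - 1 /\ 0 < absum x y.
Proof.
  unfold absum, sum8, sumb.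
  pose proof (fun i j k => Rabs_pos (y i j k - x i j k)) as P.
  pose proof (P false false false). pose proof (P false false true).
  pose proof (P false true false). pose proof (P false true true).
  pose proof (P true false false). pose proof (P true false true).
  pose proof (P true true false). pose proof (P true true true).
  destruct i, j, k; split; lra.
Qed.

Lemma gpt_pull x y (U : pt -> Prop) t :
  Defs.open_set U -> U (gpt x y t) ->
  exists d, 0 < d /\ forall s, Rabs (s - t) < d -> U (gpt x y s).
Proof.
  intros HU Ht. destruct (HU _ Ht) as [eps [Heps H]].
  assert (HK : 0 < absum x y) by (apply (absum_bound x y false false false)).
  exists (eps / absum x y). split.
  { apply Rdiv_lt_0_compat; lra. }
  intros s Hs. apply H. intros i j k. unfold gpt.
  replace (x i j k + s * (y i j k - x i j k) - (x i j k + t * (y i j k - x i j k)))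
    with ((s - t) * (y i j k - x i j k)) by ring.
  rewrite Rabs_mult.
  destruct (absum_bound x y i j k) as [B _].
  assert (Rabs (s - t) * absum x y < eps).
  { apply Rmult_lt_compat_r with (r := absum x y) in Hs; auto.
    unfold Rdiv in Hs. rewrite Rmult_assoc, Rinv_l in Hs; lra. }
  pose proof (Rabs_pos (s - t)). pose proof (Rabs_pos (y i j k - x i j k)).
  assert (Rabs (s - t) * Rabs (y i j k - x i j k) <= Rabs (s - t) * absum x y).
  { apply Rmult_le_compat_l; lra. }
  lra.
Qed.

Lemma interval_conn x y (U V : pt -> Prop) tu tv :
  Defs.open_set U -> Defs.open_set V ->
  (forall t, 0 <= t <= 1 -> U (gpt x y t) \/ V (gpt x y t)) ->
  (forall t, 0 <= t <= 1 -> U (gpt x y t) -> V (gpt x y t) -> False) ->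
  0 <= tu <= 1 -> 0 <= tv <= 1 -> tu <= tv -> U (gpt x y tu) -> V (gpt x y tv) -> False.
Proof.
  intros HU HV Hcov Hdis Htu Htv Hle Uu Vv.
  set (E := fun t => tu <= t <= tv /\ forall s, tu <= s <= t -> U (gpt x y s)).
  assert (Eb : bound E). { exists tv. intros t [Ht _]. lra. }
  assert (Ee : exists t, E t).
  { exists tu. split; [lra|]. intros s Hs. replace s with tu by lra. auto. }
  destruct (completeness E Eb Ee) as [m [Hub Hlub]].
  assert (m1 : tu <= m). { apply Hub. destruct Ee as [t Et]. unfold E. split; [lra|].
    intros s Hs. replace s with tu by lra. auto. }
  assert (m2 : m <= tv). { apply Hlub. intros t [Ht _]. lra. }
  assert (HA : forall s, tu <= s < m -> U (gpt x y s)).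
  { intros s Hs. apply NNPP. intro Hn.
    assert (m <= s). { apply Hlub. intros t [Ht Ht2]. destruct (Rle_or_lt t s); auto.
      exfalso. apply Hn. apply Ht2. lra. }
    lra. }
  destruct (Hcov m ltac:(lra)) as [Um | Vm].
  - destruct (Req_dec m tv) as [e | ne].
    + subst m. apply (Hdis tv); auto.
    + destruct (gpt_pull x y U m HU Um) as [d [Hd Hdd]].
      set (m' := Rmin (m + d / 2) tv).
      assert (Em' : E m').
      { unfold E, m'. split.
        - split; [apply Rmin_glb; lra | apply Rmin_r].
        - intros s Hs. destruct (Rlt_or_le s m).
          + apply HA; lra.
          + apply Hdd. assert (s <= m + d/2) by (pose proof (Rmin_l (m + d/2) tv); lra).
            rewrite Rabs_right; lra. }
      pose proof (Hub _ Em') as H. unfold m' in H.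
      unfold Rmin in H. destruct (Rle_dec (m + d/2) tv); lra.
  - destruct (Req_dec m tu) as [e | ne].
    + subst m. apply (Hdis tu); auto.
    + destruct (gpt_pull x y V m HV Vm) as [d [Hd Hdd]].
      set (s := Rmax tu (m - d / 2)).
      assert (s1 : tu <= s) by apply Rmax_l.
      assert (s2 : s < m) by (unfold s; apply Rmax_lub_lt; lra).
      assert (s3 : m - d/2 <= s) by apply Rmax_r.
      apply (Hdis s); [lra | apply HA; lra | apply Hdd].
      rewrite Rabs_left; lra.
Qed.

Definition seg (x y : pt) : pt -> Prop :=
  fun z => exists t, 0 <= t <= 1 /\ z = gpt x y t.

Lemma seg_connected x y : connected_set (seg x y).
Proof.
  intros [U [V [HU [HV [Hcov [Hu [Hv Hdis]]]]]]].
  destruct Hu as [zu [[tu [Htu eu]] Uu]]. destruct Hv as [zv [[tv [Htv ev]] Vv]].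
  subst zu zv.
  assert (Hc : forall t, 0 <= t <= 1 -> U (gpt x y t) \/ V (gpt x y t)).
  { intros t Ht. apply Hcov. exists t; auto. }
  assert (Hd : forall t, 0 <= t <= 1 -> U (gpt x y t) -> V (gpt x y t) -> False).
  { intros t Ht. apply Hdis. exists t; auto. }
  destruct (Rle_or_lt tu tv).
  - apply (interval_conn x y U V tu tv); auto.
  - apply (interval_conn x y V U tv tu); auto.
    + intros t Ht. destruct (Hc t Ht); auto.
    + intros t Ht A B. apply (Hd t Ht); auto.
    + lra.
Qed.


Definition agree (F : pt -> R) x y := (0 < F x /\ 0 < F y) \/ (F x < 0 /\ F y < 0).

Lemma agree_seg (F : pt -> R) x y t :
  (forall t, F (gpt x y t) = F x + t * (F y - F x)) ->
  agree F x y -> 0 <= t <= 1 -> F (gpt x y t) <> 0.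
Proof.
  intros HF [[A B] | [A B]] Ht; rewrite HF; nra.
Qed.

Lemma same_comp_of_agree x y :
  agree L10 x y -> agree L11 x y -> agree L20 x y -> agree L21 x y ->
  agree L30 x y -> agree L31 x y -> same_component arr_complement x y.
Proof.
  intros A1 A2 A3 A4 A5 A6. exists (seg x y). split; [|split; [apply seg_connected|split]].
  - intros z [t [Ht ->]].
    repeat split; (eapply agree_seg; [ | eassumption | exact Ht]);
      intro s; unfold gpt, L10, L11, L20, L21, L30, L31; ring.
  - exists 0. split; [lra|]. unfold gpt.
    apply functional_extensionality; intro i; apply functional_extensionality; intro j;
    apply functional_extensionality; intro k; ring.
  - exists 1. split; [lra|]. unfold gpt.
    apply functional_extensionality; intro i; apply functional_extensionality; intro j;
    apply functional_extensionality; intro k; ring.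
Qed.


Definition permIKJ (p : pt) : pt := fun i j k => p i k j.
Definition flip (p : pt) : pt := fun i j k => p (negb i) (negb j) (negb k).

Lemma rank3_permIKJ p : rank3 (permIKJ p) -> rank3 p.
Proof.
  intros [a [b [c [Ha [Hb [Hc H]]]]]]. exists a, c, b. repeat split; auto.
  intros i j k. change (p i j k) with (permIKJ p i k j). rewrite H. ring.
Qed.

Lemma rank3_flip p : rank3 p -> rank3 (flip p).
Proof.
  intros [a [b [c [Ha [Hb [Hc H]]]]]].
  exists (fun r i => a r (negb i)), (fun r i => b r (negb i)), (fun r i => c r (negb i)).
  repeat split; auto. intros i j k. unfold flip. apply H.
Qed.

Lemma div_nonneg x y : (0 < x /\ 0 < y) \/ (x < 0 /\ y < 0) -> 0 <= x / y.
Proof.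
  intros [[A B] | [A B]].
  - apply Rlt_le, Rdiv_lt_0_compat; auto.
  - replace (x / y) with ((- x) / (- y)) by (field; lra).
    apply Rlt_le, Rdiv_lt_0_compat; lra.
Qed.

Lemma constr_core (A0 A1 B0 B1 C0 C1 : R) :
  0 < A0 -> 0 < B0 -> 0 < C0 ->
  let d1 := A0 * B1 - A1 * B0 in
  let d2 := B0 * C1 - B1 * C0 in
  let D := A0 * C1 - A1 * C0 in
  (0 < d1 /\ 0 < d2) \/ (d1 < 0 /\ d2 < 0) ->
  D <> 0 /\ 0 <= d1 / D /\ 0 <= d2 / D /\
  B0 = d2 / D * A0 + d1 / D * C0 /\ B1 = d2 / D * A1 + d1 / D * C1.
Proof.
  intros HA HB HC d1 d2 D Hs.
  assert (Id : B0 * D = A0 * d2 + C0 * d1) by (unfold D, d1, d2; ring).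
  assert (HD : (0 < D /\ 0 < d1 /\ 0 < d2) \/ (D < 0 /\ d1 < 0 /\ d2 < 0)).
  { destruct Hs as [[X Y] | [X Y]].
    - left. repeat split; auto.
      assert (0 < B0 * D) by (rewrite Id; nra). nra.
    - right. repeat split; auto.
      assert (B0 * D < 0) by (rewrite Id; nra). nra. }
  assert (D <> 0) by (destruct HD as [[? ?]|[? ?]]; lra).
  repeat split; auto.
  - apply div_nonneg. destruct HD as [[? [? ?]]|[? [? ?]]]; [left|right]; lra.
  - apply div_nonneg. destruct HD as [[? [? ?]]|[? [? ?]]]; [left|right]; lra.
  - unfold d1, d2, D in *. field. auto.
  - unfold d1, d2, D in *. field. auto.
Qed.

Definition ind (b x : bool) : R := if Bool.eqb x b then 1 else 0.

Lemma constr (q : pt) (i0 k0 : bool) :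
  (forall i j k, 0 < q i j k) ->
  (0 < q i0 false k0 * q i0 true (negb k0) - q i0 true k0 * q i0 false (negb k0) /\
   0 < q i0 false (negb k0) * q (negb i0) true (negb k0) - q i0 true (negb k0) * q (negb i0) false (negb k0))
  \/
  (q i0 false k0 * q i0 true (negb k0) - q i0 true k0 * q i0 false (negb k0) < 0 /\
   q i0 false (negb k0) * q (negb i0) true (negb k0) - q i0 true (negb k0) * q (negb i0) false (negb k0) < 0) ->
  rank3 q.
Proof.
  intros Hq Hs.
  destruct (constr_core (q i0 false k0) (q i0 true k0) (q i0 false (negb k0)) (q i0 true (negb k0))
     (q (negb i0) false (negb k0)) (q (negb i0) true (negb k0)) (Hq _ _ _) (Hq _ _ _) (Hq _ _ _) Hs)
    as [HD [Hmu [Ht [E0 E1]]]].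
  set (D := q i0 false k0 * q (negb i0) true (negb k0) - q i0 true k0 * q (negb i0) false (negb k0)) in *.
  set (mu := (q i0 false k0 * q i0 true (negb k0) - q i0 true k0 * q i0 false (negb k0)) / D) in *.
  set (t := (q i0 false (negb k0) * q (negb i0) true (negb k0) - q i0 true (negb k0) * q (negb i0) false (negb k0)) / D) in *.
  clearbody D mu t.
  exists (fun r i => match r with 0%nat => ind i0 i | 1%nat => ind (negb i0) i | _ => if Bool.eqb i i0 then mu else 1 end).
  exists (fun r j => match r with 0%nat => q i0 j k0 | 1%nat => q (negb i0) j k0 | _ => q (negb i0) j (negb k0) end).
  exists (fun r k => match r with 0%nat => if Bool.eqb k k0 then 1 else t | 1%nat => ind k0 k | _ => ind (negb k0) k end).
  repeat split.
  - intros [|[|r]] i; unfold ind; destruct (Bool.eqb _ _); lra.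
  - intros [|[|r]] j; apply Rlt_le, Hq.
  - intros [|[|r]] k; unfold ind; destruct (Bool.eqb _ _); lra.
  - intros i j k. unfold ind.
    destruct i0, k0, i, j, k; simpl in *; try rewrite E0; try rewrite E1; ring.
Qed.


Lemma pick3 (x0 x1 x2 P m : R) : 3 * m <= P -> P = x0 + x1 + x2 ->
  m <= x0 \/ m <= x1 \/ m <= x2.
Proof. intros. destruct (Rle_or_lt m x0); [left; auto|].
  destruct (Rle_or_lt m x1); [right; left; auto|]. right; right; lra. Qed.

Lemma pairbound (u v U V m : R) : 0 <= u -> 0 <= v -> m <= u -> m <= v -> 0 < m ->
  u * v = U * V -> 0 <= U -> 0 <= V -> U * V < m * m -> False.
Proof. intros. assert (m * m <= u * v) by (apply Rmult_le_compat; lra). lra. Qed.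

Lemma le_sum3 (x y z : R) : 0 <= x -> 0 <= y -> 0 <= z -> x <= x + y + z /\ y <= x + y + z /\ z <= x + y + z.
Proof. intros; lra. Qed.

Lemma norank3 (p : pt) (m : R) : 0 < m ->
  3 * m <= p false false false -> 3 * m <= p false true true ->
  3 * m <= p true false true -> 3 * m <= p true true false ->
  p false false true * p false true false < m * m ->
  p false false true * p true false false < m * m ->
  p false true false * p true false false < m * m ->
  p false false true * p true true true < m * m ->
  p false true false * p true true true < m * m ->
  p true false false * p true true true < m * m ->
  ~ rank3 p.
Proof.
  intros Hm H1 H2 H3 H4 Q1 Q2 Q3 Q4 Q5 Q6 [a [b [c [Ha [Hb [Hc H]]]]]].
  set (T := fun r i j k => a r i * b r j * c r k).
  assert (T0 : forall r i j k, 0 <= T r i j k).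
  { intros. unfold T. apply Rmult_le_pos; [apply Rmult_le_pos|]; auto. }
  assert (HT : forall i j k, p i j k = T 0%nat i j k + T 1%nat i j k + T 2%nat i j k) by (intros; apply H).
  assert (Tle : forall r i j k, (r < 3)%nat -> T r i j k <= p i j k).
  { intros r i j k Hr. rewrite HT.
    destruct (le_sum3 _ _ _ (T0 0%nat i j k) (T0 1%nat i j k) (T0 2%nat i j k)) as [? [? ?]].
    destruct r as [|[|[|r]]]; auto; lia. }
  assert (P12 : forall r, (r < 3)%nat -> m <= T r false false false -> m <= T r false true true -> False).
  { intros r Hr A B. apply (pairbound _ _ (T r false false true) (T r false true false) m (T0 _ _ _ _) (T0 _ _ _ _) A B Hm);
      [unfold T; ring | apply T0 | apply T0 |].
    eapply Rle_lt_trans; [|exact Q1]. apply Rmult_le_compat; auto. }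
  assert (P13 : forall r, (r < 3)%nat -> m <= T r false false false -> m <= T r true false true -> False).
  { intros r Hr A B. apply (pairbound _ _ (T r false false true) (T r true false false) m (T0 _ _ _ _) (T0 _ _ _ _) A B Hm);
      [unfold T; ring | apply T0 | apply T0 |].
    eapply Rle_lt_trans; [|exact Q2]. apply Rmult_le_compat; auto. }
  assert (P14 : forall r, (r < 3)%nat -> m <= T r false false false -> m <= T r true true false -> False).
  { intros r Hr A B. apply (pairbound _ _ (T r false true false) (T r true false false) m (T0 _ _ _ _) (T0 _ _ _ _) A B Hm);
      [unfold T; ring | apply T0 | apply T0 |].
    eapply Rle_lt_trans; [|exact Q3]. apply Rmult_le_compat; auto. }
  assert (P23 : forall r, (r < 3)%nat -> m <= T r false true true -> m <= T r true false true -> False).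
  { intros r Hr A B. apply (pairbound _ _ (T r false false true) (T r true true true) m (T0 _ _ _ _) (T0 _ _ _ _) A B Hm);
      [unfold T; ring | apply T0 | apply T0 |].
    eapply Rle_lt_trans; [|exact Q4]. apply Rmult_le_compat; auto. }
  assert (P24 : forall r, (r < 3)%nat -> m <= T r false true true -> m <= T r true true false -> False).
  { intros r Hr A B. apply (pairbound _ _ (T r false true false) (T r true true true) m (T0 _ _ _ _) (T0 _ _ _ _) A B Hm);
      [unfold T; ring | apply T0 | apply T0 |].
    eapply Rle_lt_trans; [|exact Q5]. apply Rmult_le_compat; auto. }
  assert (P34 : forall r, (r < 3)%nat -> m <= T r true false true -> m <= T r true true false -> False).
  { intros r Hr A B. apply (pairbound _ _ (T r true false false) (T r true true true) m (T0 _ _ _ _) (T0 _ _ _ _) A B Hm);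
      [unfold T; ring | apply T0 | apply T0 |].
    eapply Rle_lt_trans; [|exact Q6]. apply Rmult_le_compat; auto. }
  destruct (pick3 _ _ _ _ _ H1 (HT _ _ _)) as [E1|[E1|E1]];
  destruct (pick3 _ _ _ _ _ H2 (HT _ _ _)) as [E2|[E2|E2]];
  destruct (pick3 _ _ _ _ _ H3 (HT _ _ _)) as [E3|[E3|E3]];
  destruct (pick3 _ _ _ _ _ H4 (HT _ _ _)) as [E4|[E4|E4]];
  first [ (eapply P12; [ | exact E1 | exact E2 ]; lia) | (eapply P13; [ | exact E1 | exact E3 ]; lia) | (eapply P14; [ | exact E1 | exact E4 ]; lia)
        | (eapply P23; [ | exact E2 | exact E3 ]; lia) | (eapply P24; [ | exact E2 | exact E4 ]; lia) | (eapply P34; [ | exact E3 | exact E4 ]; lia) ].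
Qed.


Lemma S_pos l : 0 < sum8 (fun i j k => exp (l i j k)).
Proof.
  unfold sum8, sumb.
  pose proof (fun i j k => exp_pos (l i j k)) as P.
  pose proof (P false false false). pose proof (P false false true).
  pose proof (P false true false). pose proof (P false true true).
  pose proof (P true false false). pose proof (P true false true).
  pose proof (P true true false). pose proof (P true true true). lra.
Qed.

Lemma softmax_pos l i j k : 0 < softmax l i j k.
Proof. unfold softmax. apply Rdiv_lt_0_compat; [apply exp_pos | apply S_pos]. Qed.

Lemma softmax_simplex l : in_simplex (softmax l).
Proof.
  split. { intros; apply Rlt_le, softmax_pos. }
  pose proof (S_pos l). unfold softmax. unfold sum8 at 1, sumb.
  unfold sum8, sumb in *. field. lra.
Qed.

Lemma sm_pos l (a1 b1 c1 a2 b2 c2 a3 b3 c3 a4 b4 c4 : bool) :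
  l a3 b3 c3 + l a4 b4 c4 < l a1 b1 c1 + l a2 b2 c2 ->
  0 < softmax l a1 b1 c1 * softmax l a2 b2 c2 - softmax l a3 b3 c3 * softmax l a4 b4 c4.
Proof.
  intros H. pose proof (S_pos l). unfold softmax.
  set (S := sum8 _) in *.
  replace (exp (l a1 b1 c1) / S * (exp (l a2 b2 c2) / S) - exp (l a3 b3 c3) / S * (exp (l a4 b4 c4) / S))
    with ((exp (l a1 b1 c1 + l a2 b2 c2) - exp (l a3 b3 c3 + l a4 b4 c4)) / (S * S))
    by (rewrite !exp_plus; field; lra).
  apply Rdiv_lt_0_compat; [|nra].
  pose proof (exp_increasing _ _ H). lra.
Qed.

Lemma sm_neg l (a1 b1 c1 a2 b2 c2 a3 b3 c3 a4 b4 c4 : bool) :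
  l a1 b1 c1 + l a2 b2 c2 < l a3 b3 c3 + l a4 b4 c4 ->
  softmax l a1 b1 c1 * softmax l a2 b2 c2 - softmax l a3 b3 c3 * softmax l a4 b4 c4 < 0.
Proof.
  intros H. pose proof (sm_pos l a3 b3 c3 a4 b4 c4 a1 b1 c1 a2 b2 c2 H). lra.
Qed.


Definition mk (x000 x001 x010 x011 x100 x101 x110 x111 : R) : pt :=
  fun i j k => if i then (if j then (if k then x111 else x110) else (if k then x101 else x100))
               else (if j then (if k then x011 else x010) else (if k then x001 else x000)).

Definition reg (n : nat) : pt :=
  match n with
  | 0%nat => mk (-1) (-1) 0 (-1) 1 0 1 (-1)
  | 1%nat => mk (-1) 1 0 (-1) 1 0 1 (-1)
  | 2%nat => mk (-1) 1 (-1) 0 0 1 1 (-1)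
  | 3%nat => mk (-1) 0 (-1) (-1) (-1) (-1) 0 (-1)
  | 4%nat => mk (-1) 0 1 (-1) 1 1 0 (-1)
  | 5%nat => mk (-1) 0 1 (-1) (-1) (-1) 0 (-1)
  | 6%nat => mk (-1) 1 0 (-1) (-1) 0 1 1
  | 7%nat => mk (-1) (-1) 1 0 0 1 1 (-1)
  | 8%nat => mk (-1) (-1) 0 (-1) (-1) 0 1 (-1)
  | 9%nat => mk 0 1 (-1) (-1) (-1) 1 1 0
  | 10%nat => mk (-1) (-1) 0 (-1) (-1) 0 (-1) (-1)
  | 11%nat => mk (-1) 0 1 (-1) (-1) 1 0 1
  | 12%nat => mk 0 (-1) 1 (-1) (-1) 1 1 0
  | 13%nat => mk (-1) (-1) 0 (-1) (-1) 0 1 1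
  | 14%nat => mk (-1) 0 1 1 1 (-1) 0 (-1)
  | 15%nat => mk (-1) 0 (-1) (-1) 1 (-1) 0 (-1)
  | 16%nat => mk (-1) 1 (-1) 0 0 (-1) 1 1
  | 17%nat => mk (-1) (-1) 0 (-1) 1 0 (-1) (-1)
  | 18%nat => mk (-1) 0 (-1) (-1) (-1) (-1) 0 1
  | 19%nat => mk (-1) (-1) 1 0 0 1 (-1) 1
  | 20%nat => mk (-1) (-1) 0 (-1) (-1) 0 (-1) 1
  | 21%nat => mk 1 0 1 (-1) (-1) (-1) 0 1
  | 22%nat => mk (-1) (-1) 0 1 1 0 1 (-1)
  | 23%nat => mk (-1) (-1) (-1) 0 0 (-1) 1 (-1)
  | 24%nat => mk 0 1 (-1) 1 (-1) (-1) 1 0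
  | 25%nat => mk (-1) (-1) (-1) 0 0 1 (-1) (-1)
  | 26%nat => mk 0 (-1) (-1) (-1) (-1) (-1) 1 0
  | 27%nat => mk 0 (-1) 1 1 (-1) 1 (-1) 0
  | 28%nat => mk 0 (-1) (-1) (-1) (-1) 1 (-1) 0
  | 29%nat => mk 1 (-1) 0 (-1) (-1) 0 1 1
  | 30%nat => mk (-1) (-1) (-1) 0 0 (-1) (-1) (-1)
  | 31%nat => mk (-1) 0 (-1) 1 1 (-1) 0 1
  | 32%nat => mk 0 (-1) (-1) 1 1 (-1) 1 0
  | 33%nat => mk (-1) (-1) (-1) 0 0 (-1) 1 1
  | 34%nat => mk (-1) (-1) 0 1 1 0 (-1) 1
  | 35%nat => mk (-1) (-1) (-1) 0 0 (-1) (-1) 1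
  | 36%nat => mk 1 0 (-1) (-1) 1 (-1) 0 1
  | 37%nat => mk 0 (-1) (-1) 1 1 1 (-1) 0
  | 38%nat => mk 0 (-1) (-1) 1 (-1) (-1) (-1) 0
  | 39%nat => mk 1 (-1) (-1) 0 0 (-1) 1 1
  | 40%nat => mk (-1) (-1) (-1) 0 0 1 (-1) 1
  | 41%nat => mk 1 (-1) 0 (-1) 1 0 (-1) 1
  | 42%nat => mk 1 (-1) (-1) 0 0 1 (-1) 1
  | 43%nat => mk 0 (-1) (-1) (-1) (-1) (-1) (-1) 0
  | 44%nat => mk (ln 10) 0 0 (ln 10) 0 (ln 10) (ln 10) (ln 10)
  | _ => mk (ln 10) (ln 10) (ln 10) 0 (ln 10) 0 0 (ln 10)
  end.

Definition sgl (n : nat) : list bool :=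
  match n with
  | 0%nat => [false; false; false; false; false; false]
  | 1%nat => [false; false; false; false; false; true]
  | 2%nat => [false; false; false; false; true; false]
  | 3%nat => [false; false; false; false; true; true]
  | 4%nat => [false; false; false; true; false; false]
  | 5%nat => [false; false; false; true; false; true]
  | 6%nat => [false; false; false; true; true; true]
  | 7%nat => [false; false; true; false; false; false]
  | 8%nat => [false; false; true; false; true; false]
  | 9%nat => [false; false; true; false; true; true]
  | 10%nat => [false; false; true; true; false; false]
  | 11%nat => [false; false; true; true; false; true]
  | 12%nat => [false; false; true; true; true; false]
  | 13%nat => [false; false; true; true; true; true]
  | 14%nat => [false; true; false; false; false; false]
  | 15%nat => [false; true; false; false; false; true]
  | 16%nat => [false; true; false; false; true; true]
  | 17%nat => [false; true; false; true; false; false]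
  | 18%nat => [false; true; false; true; true; true]
  | 19%nat => [false; true; true; true; false; false]
  | 20%nat => [false; true; true; true; false; true]
  | 21%nat => [false; true; true; true; true; true]
  | 22%nat => [true; false; false; false; false; false]
  | 23%nat => [true; false; false; false; true; false]
  | 24%nat => [true; false; false; false; true; true]
  | 25%nat => [true; false; true; false; false; false]
  | 26%nat => [true; false; true; false; true; true]
  | 27%nat => [true; false; true; true; false; false]
  | 28%nat => [true; false; true; true; true; false]
  | 29%nat => [true; false; true; true; true; true]
  | 30%nat => [true; true; false; false; false; false]
  | 31%nat => [true; true; false; false; false; true]
  | 32%nat => [true; true; false; false; true; false]
  | 33%nat => [true; true; false; false; true; true]
  | 34%nat => [true; true; false; true; false; false]
  | 35%nat => [true; true; false; true; false; true]
  | 36%nat => [true; true; false; true; true; true]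
  | 37%nat => [true; true; true; false; false; false]
  | 38%nat => [true; true; true; false; true; false]
  | 39%nat => [true; true; true; false; true; true]
  | 40%nat => [true; true; true; true; false; false]
  | 41%nat => [true; true; true; true; false; true]
  | 42%nat => [true; true; true; true; true; false]
  | 43%nat => [true; true; true; true; true; true]
  | 44%nat => [true; false; true; false; true; false]
  | _ => [false; true; false; true; false; true]
  end.

Definition decode (b1 b2 b3 b4 b5 b6 : bool) : nat :=
  match b1, b2, b3, b4, b5, b6 with
  | false, false, false, false, false, false => 0%nat
  | false, false, false, false, false, true => 1%nat
  | false, false, false, false, true, false => 2%nat
  | false, false, false, false, true, true => 3%nat
  | false, false, false, true, false, false => 4%nat
  | false, false, false, true, false, true => 5%nat
  | false, false, false, true, true, true => 6%nat
  | false, false, true, false, false, false => 7%nat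
  | false, false, true, false, true, false => 8%nat
  | false, false, true, false, true, true => 9%nat
  | false, false, true, true, false, false => 10%nat
  | false, false, true, true, false, true => 11%nat
  | false, false, true, true, true, false => 12%nat
  | false, false, true, true, true, true => 13%nat
  | false, true, false, false, false, false => 14%nat
  | false, true, false, false, false, true => 15%nat
  | false, true, false, false, true, true => 16%nat
  | false, true, false, true, false, false => 17%nat
  | false, true, false, true, true, true => 18%nat
  | false, true, true, true, false, false => 19%nat
  | false, true, true, true, false, true => 20%nat
  | false, true, true, true, true, true => 21%nat
  | true, false, false, false, false, false => 22%nat
  | true, false, false, false, true, false => 23%nat
  | true, false, false, false, true, true => 24%nat
  | true, false, true, false, false, false => 25%nat
  | true, false, true, false, true, true => 26%nat
  | true, false, true, true, false, false => 27%nat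
  | true, false, true, true, true, false => 28%nat
  | true, false, true, true, true, true => 29%nat
  | true, true, false, false, false, false => 30%nat
  | true, true, false, false, false, true => 31%nat
  | true, true, false, false, true, false => 32%nat
  | true, true, false, false, true, true => 33%nat
  | true, true, false, true, false, false => 34%nat
  | true, true, false, true, false, true => 35%nat
  | true, true, false, true, true, true => 36%nat
  | true, true, true, false, false, false => 37%nat
  | true, true, true, false, true, false => 38%nat
  | true, true, true, false, true, true => 39%nat
  | true, true, true, true, false, false => 40%nat
  | true, true, true, true, false, true => 41%nat
  | true, true, true, true, true, false => 42%nat
  | true, true, true, true, true, true => 43%nat
  | true, false, true, false, true, false => 44%nat
  | false, true, false, true, false, true => 45%nat
  | _, _, _, _, _, _ => 46%nat
  end.

Definition sg (n q : nat) : bool := nth q (sgl n) false.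

Definition Lq (q : nat) (l : pt) : R :=
  match q with 0%nat => L10 l | 1%nat => L11 l | 2%nat => L20 l | 3%nat => L21 l
  | 4%nat => L30 l | _ => L31 l end.

Lemma ln10_pos : 0 < ln 10.
Proof. rewrite <- ln_1. apply ln_increasing; lra. Qed.

Ltac unfL := unfold L10, L11, L20, L21, L30, L31 in *.

Lemma regsign n q : (n < 46)%nat -> (q < 6)%nat ->
  (sg n q = true -> 0 < Lq q (reg n)) /\ (sg n q = false -> Lq q (reg n) < 0).
Proof.
  intros Hn Hq. pose proof ln10_pos.
  do 46 (destruct n as [|n]; [
    do 6 (destruct q as [|q]; [
      cbv [sg sgl nth Lq reg mk L10 L11 L20 L21 L30 L31]; split; intro E;
        first [discriminate E | lra] | ]); lia | ]).
  lia.
Qed.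

Lemma Lq_nz q z : (q < 6)%nat -> arr_complement z -> Lq q z <> 0.
Proof.
  intros Hq [A1 [A2 [A3 [A4 [A5 A6]]]]].
  do 6 (destruct q as [|q]; [assumption|]). lia.
Qed.

Lemma Lq_open_pos q : Defs.open_set (fun z => 0 < Lq q z).
Proof.
  destruct q as [|[|[|[|[|q]]]]].
  - exact (form4_open_pos false false false false true true false false true false true false).
  - exact (form4_open_pos true false false true true true true false true true true false).
  - exact (form4_open_pos false false false true false true false false true true false false).
  - exact (form4_open_pos false true false true true true false true true true true false).
  - exact (form4_open_pos false false false true true false false true false true false false).
  - exact (form4_open_pos false false true true true true false true true true false true).
Qed.

Lemma Lq_open_neg q : Defs.open_set (fun z => Lq q z < 0).
Proof.
  destruct q as [|[|[|[|[|q]]]]].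
  - exact (form4_open_neg false false false false true true false false true false true false).
  - exact (form4_open_neg true false false true true true true false true true true false).
  - exact (form4_open_neg false false false true false true false false true true false false).
  - exact (form4_open_neg false true false true true true false true true true true false).
  - exact (form4_open_neg false false false true true false false true false true false false).
  - exact (form4_open_neg false false true true true true false true true true false true).
Qed.

Lemma sc_L q x y : (q < 6)%nat -> same_component arr_complement x y ->
  (0 < Lq q x -> 0 < Lq q y) /\ (Lq q x < 0 -> Lq q y < 0).
Proof.
  intros Hq H. apply sc_sign; auto.
  - intros z Hz; apply Lq_nz; auto.
  - apply Lq_open_pos.
  - apply Lq_open_neg.
Qed.

Lemma sc_reg n l q : (n < 46)%nat -> (q < 6)%nat -> same_component arr_complement (reg n) l ->
  (sg n q = true -> 0 < Lq q l) /\ (sg n q = false -> Lq q l < 0).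
Proof.
  intros Hn Hq H. destruct (regsign n q Hn Hq) as [A B]. destruct (sc_L q _ _ Hq H) as [C D].
  split; auto.
Qed.

Lemma reg_compl n : (n < 46)%nat -> arr_complement (reg n).
Proof.
  intros Hn.
  assert (K : forall q, (q < 6)%nat -> Lq q (reg n) <> 0).
  { intros q Hq. destruct (regsign n q Hn Hq) as [A B].
    destruct (sg n q); [specialize (A eq_refl) | specialize (B eq_refl)]; lra. }
  repeat split; [apply (K 0%nat) | apply (K 1%nat) | apply (K 2%nat) | apply (K 3%nat)
    | apply (K 4%nat) | apply (K 5%nat)]; lia.
Qed.

Lemma decode_ok n : (n < 46)%nat ->
  decode (sg n 0) (sg n 1) (sg n 2) (sg n 3) (sg n 4) (sg n 5) = n.
Proof.
  intros Hn. do 46 (destruct n as [|n]; [reflexivity|]). lia.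
Qed.

Lemma sg_eq n m q : (n < 46)%nat -> (m < 46)%nat -> (q < 6)%nat ->
  same_component arr_complement (reg n) (reg m) -> sg n q = sg m q.
Proof.
  intros Hn Hm Hq H. destruct (sc_reg n (reg m) q Hn Hq H) as [A B].
  destruct (regsign m q Hm Hq) as [C D].
  destruct (sg n q), (sg m q); auto.
  - specialize (A eq_refl). specialize (D eq_refl). lra.
  - specialize (B eq_refl). specialize (C eq_refl). lra.
Qed.

Lemma distinct n m : (n < 46)%nat -> (m < 46)%nat -> n <> m ->
  ~ same_component arr_complement (reg n) (reg m).
Proof.
  intros Hn Hm Hnm H. apply Hnm.
  rewrite <- (decode_ok n Hn), <- (decode_ok m Hm).
  rewrite !(sg_eq n m) by (auto; lia). reflexivity.
Qed.

Lemma cover_aux (l : pt) (b1 b2 b3 b4 b5 b6 : bool) :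
  (if b1 then 0 < L10 l else L10 l < 0) -> (if b2 then 0 < L11 l else L11 l < 0) ->
  (if b3 then 0 < L20 l else L20 l < 0) -> (if b4 then 0 < L21 l else L21 l < 0) ->
  (if b5 then 0 < L30 l else L30 l < 0) -> (if b6 then 0 < L31 l else L31 l < 0) ->
  (decode b1 b2 b3 b4 b5 b6 < 46)%nat /\
  sg (decode b1 b2 b3 b4 b5 b6) 0 = b1 /\ sg (decode b1 b2 b3 b4 b5 b6) 1 = b2 /\
  sg (decode b1 b2 b3 b4 b5 b6) 2 = b3 /\ sg (decode b1 b2 b3 b4 b5 b6) 3 = b4 /\
  sg (decode b1 b2 b3 b4 b5 b6) 4 = b5 /\ sg (decode b1 b2 b3 b4 b5 b6) 5 = b6.
Proof.
  intros H1 H2 H3 H4 H5 H6.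
  destruct b1, b2, b3, b4, b5, b6;
    first [ (cbv [decode sg sgl nth]; split; [lia | repeat split])
          | (exfalso; unfL; lra) ].
Qed.

Lemma sign_of (x : R) : x <> 0 -> if (if Rlt_dec 0 x then true else false) then 0 < x else x < 0.
Proof. intros. destruct (Rlt_dec 0 x); auto. lra. Qed.

Lemma agree_of q n l : (n < 46)%nat -> (q < 6)%nat ->
  (if sg n q then 0 < Lq q l else Lq q l < 0) -> agree (Lq q) (reg n) l.
Proof.
  intros Hn Hq H. destruct (regsign n q Hn Hq) as [A B]. unfold agree.
  destruct (sg n q); [left; split; auto | right; split; auto].
Qed.

Lemma cover l : arr_complement l -> exists n, (n < 46)%nat /\ same_component arr_complement (reg n) l.
Proof.
  intros Hl. pose proof Hl as [A1 [A2 [A3 [A4 [A5 A6]]]]].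
  destruct (cover_aux l _ _ _ _ _ _ (sign_of _ A1) (sign_of _ A2) (sign_of _ A3)
    (sign_of _ A4) (sign_of _ A5) (sign_of _ A6)) as [Hn [E1 [E2 [E3 [E4 [E5 E6]]]]]].
  set (n := decode _ _ _ _ _ _) in *. exists n. split; auto.
  apply same_comp_of_agree.
  - apply (agree_of 0%nat n l Hn); [lia|]. rewrite E1. apply sign_of; auto.
  - apply (agree_of 1%nat n l Hn); [lia|]. rewrite E2. apply sign_of; auto.
  - apply (agree_of 2%nat n l Hn); [lia|]. rewrite E3. apply sign_of; auto.
  - apply (agree_of 3%nat n l Hn); [lia|]. rewrite E4. apply sign_of; auto.
  - apply (agree_of 4%nat n l Hn); [lia|]. rewrite E5. apply sign_of; auto.
  - apply (agree_of 5%nat n l Hn); [lia|]. rewrite E6. apply sign_of; auto.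
Qed.

Lemma pick_sign (b : bool) (P Q : Prop) : (b = true -> P) /\ (b = false -> Q) -> if b then P else Q.
Proof. destruct b; intros [A B]; auto. Qed.

Ltac signtac :=
  cbv [permIKJ negb];
  first [ left; split; (apply sm_pos; unfL; lra) | right; split; (apply sm_neg; unfL; lra) ].

Lemma good n : (n < 44)%nat -> forall l, same_component arr_complement (reg n) l -> M33 (softmax l).
Proof.
  intros Hn l H. split; [apply softmax_simplex|]. change (rank3 (softmax l)).
  assert (Hn' : (n < 46)%nat) by lia.
  pose proof (pick_sign _ _ _ (sc_reg n l 0%nat Hn' ltac:(lia) H)) as H0.
  pose proof (pick_sign _ _ _ (sc_reg n l 1%nat Hn' ltac:(lia) H)) as H1.
  pose proof (pick_sign _ _ _ (sc_reg n l 2%nat Hn' ltac:(lia) H)) as H2.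
  pose proof (pick_sign _ _ _ (sc_reg n l 3%nat Hn' ltac:(lia) H)) as H3.
  pose proof (pick_sign _ _ _ (sc_reg n l 4%nat Hn' ltac:(lia) H)) as H4.
  pose proof (pick_sign _ _ _ (sc_reg n l 5%nat Hn' ltac:(lia) H)) as H5.
  clear H Hn'.
  destruct n as [|n]; [ cbv [sg sgl nth Lq] in H0, H1, H2, H3, H4, H5; (apply (constr _ false false (softmax_pos l)); signtac) |].
  destruct n as [|n]; [ cbv [sg sgl nth Lq] in H0, H1, H2, H3, H4, H5; (apply (constr _ true false (softmax_pos l)); signtac) |].
  destruct n as [|n]; [ cbv [sg sgl nth Lq] in H0, H1, H2, H3, H4, H5; (apply (constr _ false false (softmax_pos l)); signtac) |].
  destruct n as [|n]; [ cbv [sg sgl nth Lq] in H0, H1, H2, H3, H4, H5; (apply (constr _ false true (softmax_pos l)); signtac) |].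
  destruct n as [|n]; [ cbv [sg sgl nth Lq] in H0, H1, H2, H3, H4, H5; (apply (constr _ false false (softmax_pos l)); signtac) |].
  destruct n as [|n]; [ cbv [sg sgl nth Lq] in H0, H1, H2, H3, H4, H5; (apply (constr _ true false (softmax_pos l)); signtac) |].
  destruct n as [|n]; [ cbv [sg sgl nth Lq] in H0, H1, H2, H3, H4, H5; (apply (constr _ false true (softmax_pos l)); signtac) |].
  destruct n as [|n]; [ cbv [sg sgl nth Lq] in H0, H1, H2, H3, H4, H5; (apply (constr _ false false (softmax_pos l)); signtac) |].
  destruct n as [|n]; [ cbv [sg sgl nth Lq] in H0, H1, H2, H3, H4, H5; (apply (constr _ false false (softmax_pos l)); signtac) |].
  destruct n as [|n]; [ cbv [sg sgl nth Lq] in H0, H1, H2, H3, H4, H5; (apply (constr _ false true (softmax_pos l)); signtac) |].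
  destruct n as [|n]; [ cbv [sg sgl nth Lq] in H0, H1, H2, H3, H4, H5; (apply (constr _ false false (softmax_pos l)); signtac) |].
  destruct n as [|n]; [ cbv [sg sgl nth Lq] in H0, H1, H2, H3, H4, H5; (apply (constr _ true false (softmax_pos l)); signtac) |].
  destruct n as [|n]; [ cbv [sg sgl nth Lq] in H0, H1, H2, H3, H4, H5; (apply (constr _ false false (softmax_pos l)); signtac) |].
  destruct n as [|n]; [ cbv [sg sgl nth Lq] in H0, H1, H2, H3, H4, H5; (apply (constr _ false true (softmax_pos l)); signtac) |].
  destruct n as [|n]; [ cbv [sg sgl nth Lq] in H0, H1, H2, H3, H4, H5; (apply (constr _ false false (softmax_pos l)); signtac) |].
  destruct n as [|n]; [ cbv [sg sgl nth Lq] in H0, H1, H2, H3, H4, H5; (apply rank3_permIKJ; apply (constr _ false false (fun i j k => softmax_pos l i k j)); signtac) |].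
  destruct n as [|n]; [ cbv [sg sgl nth Lq] in H0, H1, H2, H3, H4, H5; (apply (constr _ false true (softmax_pos l)); signtac) |].
  destruct n as [|n]; [ cbv [sg sgl nth Lq] in H0, H1, H2, H3, H4, H5; (apply (constr _ false false (softmax_pos l)); signtac) |].
  destruct n as [|n]; [ cbv [sg sgl nth Lq] in H0, H1, H2, H3, H4, H5; (apply (constr _ false true (softmax_pos l)); signtac) |].
  destruct n as [|n]; [ cbv [sg sgl nth Lq] in H0, H1, H2, H3, H4, H5; (apply (constr _ false false (softmax_pos l)); signtac) |].
  destruct n as [|n]; [ cbv [sg sgl nth Lq] in H0, H1, H2, H3, H4, H5; (apply rank3_permIKJ; apply (constr _ false true (fun i j k => softmax_pos l i k j)); signtac) |].
  destruct n as [|n]; [ cbv [sg sgl nth Lq] in H0, H1, H2, H3, H4, H5; (apply (constr _ false true (softmax_pos l)); signtac) |].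
  destruct n as [|n]; [ cbv [sg sgl nth Lq] in H0, H1, H2, H3, H4, H5; (apply (constr _ false true (softmax_pos l)); signtac) |].
  destruct n as [|n]; [ cbv [sg sgl nth Lq] in H0, H1, H2, H3, H4, H5; (apply rank3_permIKJ; apply (constr _ false true (fun i j k => softmax_pos l i k j)); signtac) |].
  destruct n as [|n]; [ cbv [sg sgl nth Lq] in H0, H1, H2, H3, H4, H5; (apply (constr _ false false (softmax_pos l)); signtac) |].
  destruct n as [|n]; [ cbv [sg sgl nth Lq] in H0, H1, H2, H3, H4, H5; (apply (constr _ false true (softmax_pos l)); signtac) |].
  destruct n as [|n]; [ cbv [sg sgl nth Lq] in H0, H1, H2, H3, H4, H5; (apply (constr _ false false (softmax_pos l)); signtac) |].
  destruct n as [|n]; [ cbv [sg sgl nth Lq] in H0, H1, H2, H3, H4, H5; (apply (constr _ false true (softmax_pos l)); signtac) |].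
  destruct n as [|n]; [ cbv [sg sgl nth Lq] in H0, H1, H2, H3, H4, H5; (apply rank3_permIKJ; apply (constr _ false false (fun i j k => softmax_pos l i k j)); signtac) |].
  destruct n as [|n]; [ cbv [sg sgl nth Lq] in H0, H1, H2, H3, H4, H5; (apply (constr _ false false (softmax_pos l)); signtac) |].
  destruct n as [|n]; [ cbv [sg sgl nth Lq] in H0, H1, H2, H3, H4, H5; (apply (constr _ false true (softmax_pos l)); signtac) |].
  destruct n as [|n]; [ cbv [sg sgl nth Lq] in H0, H1, H2, H3, H4, H5; (apply (constr _ false false (softmax_pos l)); signtac) |].
  destruct n as [|n]; [ cbv [sg sgl nth Lq] in H0, H1, H2, H3, H4, H5; (apply (constr _ true false (softmax_pos l)); signtac) |].
  destruct n as [|n]; [ cbv [sg sgl nth Lq] in H0, H1, H2, H3, H4, H5; (apply (constr _ false false (softmax_pos l)); signtac) |].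
  destruct n as [|n]; [ cbv [sg sgl nth Lq] in H0, H1, H2, H3, H4, H5; (apply (constr _ false true (softmax_pos l)); signtac) |].
  destruct n as [|n]; [ cbv [sg sgl nth Lq] in H0, H1, H2, H3, H4, H5; (apply (constr _ false false (softmax_pos l)); signtac) |].
  destruct n as [|n]; [ cbv [sg sgl nth Lq] in H0, H1, H2, H3, H4, H5; (apply (constr _ false false (softmax_pos l)); signtac) |].
  destruct n as [|n]; [ cbv [sg sgl nth Lq] in H0, H1, H2, H3, H4, H5; (apply (constr _ false true (softmax_pos l)); signtac) |].
  destruct n as [|n]; [ cbv [sg sgl nth Lq] in H0, H1, H2, H3, H4, H5; (apply (constr _ true false (softmax_pos l)); signtac) |].
  destruct n as [|n]; [ cbv [sg sgl nth Lq] in H0, H1, H2, H3, H4, H5; (apply (constr _ false false (softmax_pos l)); signtac) |].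
  destruct n as [|n]; [ cbv [sg sgl nth Lq] in H0, H1, H2, H3, H4, H5; (apply (constr _ false true (softmax_pos l)); signtac) |].
  destruct n as [|n]; [ cbv [sg sgl nth Lq] in H0, H1, H2, H3, H4, H5; (apply (constr _ false false (softmax_pos l)); signtac) |].
  destruct n as [|n]; [ cbv [sg sgl nth Lq] in H0, H1, H2, H3, H4, H5; (apply (constr _ true false (softmax_pos l)); signtac) |].
  destruct n as [|n]; [ cbv [sg sgl nth Lq] in H0, H1, H2, H3, H4, H5; (apply (constr _ false false (softmax_pos l)); signtac) |].
  lia.
Qed.

Lemma sc_refl x : arr_complement x -> same_component arr_complement x x.
Proof.
  intros [A1 [A2 [A3 [A4 [A5 A6]]]]].
  apply same_comp_of_agree; unfold agree;
    match goal with |- (0 < ?F x /\ _) \/ _ =>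
      destruct (Rlt_or_le 0 (F x)); [left; split; auto | right; assert (F x <> 0) by auto; split; lra] end.
Qed.

Lemma sm44 i j k : softmax (reg 44) i j k = mk 10 1 1 10 1 10 10 10 i j k / 53.
Proof.
  assert (e : exp (ln 10) = 10) by (apply exp_ln; lra).
  unfold softmax, sum8, sumb. destruct i, j, k; cbv [reg mk];
  rewrite ?e, ?exp_0; field.
Qed.

Lemma sm45 i j k : softmax (reg 45) i j k = mk 10 10 10 1 10 1 1 10 i j k / 53.
Proof.
  assert (e : exp (ln 10) = 10) by (apply exp_ln; lra).
  unfold softmax, sum8, sumb. destruct i, j, k; cbv [reg mk];
  rewrite ?e, ?exp_0; field.
Qed.

Lemma bad44 : ~ rank3 (softmax (reg 44)).
Proof.
  apply (norank3 _ (10 / (3 * 53))); rewrite ?sm44; cbv [mk]; lra.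
Qed.

Lemma bad45 : ~ rank3 (softmax (reg 45)).
Proof.
  intro H. apply rank3_flip in H. revert H.
  apply (norank3 _ (10 / (3 * 53))); unfold flip; rewrite ?sm45; cbv [mk negb]; lra.
Qed.

Theorem mainTheorem13 :
  exists reg : nat -> pt,
    (forall n, (n < 46)%nat -> arr_complement (reg n)) /\
    (forall n m, (n < 46)%nat -> (m < 46)%nat -> n <> m ->
        ~ same_component arr_complement (reg n) (reg m)) /\
    (forall l, arr_complement l ->
        exists n, (n < 46)%nat /\ same_component arr_complement (reg n) l) /\
    (forall n, (n < 44)%nat ->
        forall l, same_component arr_complement (reg n) l -> M33 (softmax l)) /\
    (forall n, (44 <= n < 46)%nat ->
        ~ (forall l, same_component arr_complement (reg n) l -> M33 (softmax l))).
Proof.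
  exists reg. split; [exact reg_compl|]. split; [exact distinct|]. split; [exact cover|].
  split; [exact good|].
  intros n Hn Hall.
  assert (Hc : same_component arr_complement (reg n) (reg n)) by (apply sc_refl, reg_compl; lia).
  destruct (Hall _ Hc) as [_ Hr]. change (rank3 (softmax (reg n))) in Hr.
  do 44 (destruct n as [|n]; [lia|]).
  destruct n as [|n]; [exact (bad44 Hr)|].
  destruct n as [|n]; [exact (bad45 Hr)|]. lia.
Qed.
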